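(* If $k$ is even and sufficiently large, and $n$ is even, then for every integer $i$ with $k/2<i<k$, $$N(CM,k,n)\ge \frac{n(5ik-k+i+i^2)-2(k-i)}{(2k+3+i)ik}.$$ In particular, for every $\varepsilon>0$ there is $k_0$ such that for every even $k>k_0$ there is $n_0(k)$ such that for every even $n>n_0(k)$ we have $N(CM,k,n)>(11/5-\varepsilon)\,n/k$.
   Context: We are given $n$ balls, the set $[n]=\{1,\dots,n\}$, each colored with one of two colors by an unknown coloring. A ball $i$ is a majority ball if more than $n/2$ balls have the same color as $i$. A query is a subset $Q\subseteq[n]$ with $|Q|=k$. In the Counting Model (CM), the answer to a query $Q$ is the number $j\le k/2$ such that $Q$ contains exactly $j$ balls of one of the colors (and $k-j$ of the other); no indication of which color is given. A non-adaptive strategy is a family of queries $Q_1,\dots,Q_q$ fixed in advance. It succeeds if for every coloring, the answers determine the outcome: either every coloring consistent with the answers has no majority ball, or there is a ball that is a majority ball in every coloring consistent with the answers. $N(CM,k,n)$ is the minimum number of queries in a successful non-adaptive strategy. *)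

(* Defs.v *)
From mathcomp Require Import all_boot all_order all_algebra.
Set Implicit Arguments. Unset Strict Implicit. Unset Printing Implicit Defensive.
Import Order.TTheory GRing.Theory Num.Theory.

Definition coloring (n : nat) := {ffun 'I_n -> bool}.

(* Counting-model answer to query Q: the number j <= |Q|/2 of balls of the
   minority color in Q (no color information given). *)
Definition cm_answer n (c : coloring n) (Q : {set 'I_n}) : nat :=
  minn #|[set x in Q | c x]| #|[set x in Q | ~~ c x]|.

Definition majority_ball n (c : coloring n) (i : 'I_n) : Prop :=
  n < 2 * #|[set x | c x == c i]|.

(* A non-adaptive strategy: a family (list) of queries, each of size k. *)
Definition is_query_family (k : nat) n (S : seq {set 'I_n}) : Prop :=
  forall Q, Q \in S -> #|Q| = k.

Definition consistent n (S : seq {set 'I_n}) (c c' : coloring n) : Prop :=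
  forall Q, Q \in S -> cm_answer c' Q = cm_answer c Q.

Definition successful k n (S : seq {set 'I_n}) : Prop :=
  is_query_family k S /\
  forall c : coloring n,
    (forall c', consistent S c c' -> forall i, ~ majority_ball c' i) \/
    (exists i, forall c', consistent S c c' -> majority_ball c' i).

(* "N(CM,k,n) >= b": every successful non-adaptive strategy uses at least b
   queries (N is the minimum number of queries of a successful strategy). *)
Definition N_CM_ge (k n : nat) (b : rat) : Prop :=
  forall S : seq {set 'I_n}, @successful k n S -> (b <= (size S)%:R)%R.

Definition N_CM_gt (k n : nat) (b : rat) : Prop :=
  forall S : seq {set 'I_n}, @successful k n S -> (b < (size S)%:R)%R.

(* Main.v *)
Require Import Defs.
From mathcomp Require Import all_boot all_order all_algebra.
From mathcomp Require Import zify ring lra.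
Set Implicit Arguments. Unset Strict Implicit. Unset Printing Implicit Defensive.

Definition col n (R : {set 'I_n}) : coloring n := [ffun x => x \in R].
Definition symd n (R Y : {set 'I_n}) := (R :\: Y) :|: (Y :\: R).

Lemma ans_col n (R Q : {set 'I_n}) :
  cm_answer (col R) Q = minn #|Q :&: R| #|Q :\: R|.
Proof.
rewrite /cm_answer; congr minn; apply: eq_card => x; by rewrite !inE ffunE // andbC.
Qed.

Lemma card_compl n (R : {set 'I_n}) : #|~: R| = n - #|R|.
Proof. by rewrite cardsCs card_ord setCK. Qed.

Lemma class_card n (R : {set 'I_n}) i :
  #|[set x | col R x == col R i]| = if i \in R then #|R| else n - #|R|.
Proof.
case: ifP => Hi.
- apply: eq_card => x; by rewrite !inE !ffunE Hi eqb_id.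
- rewrite -card_compl; apply: eq_card => x; by rewrite !inE !ffunE Hi eqbF_neg.
Qed.

Lemma fail_balance k n (S : seq {set 'I_n}) (R R' : {set 'I_n}) :
  successful k S -> #|R|.*2 = n -> #|R'|.*2 != n ->
  consistent S (col R) (col R') -> False.
Proof.
move=> [_ Hs] HR HR' Hc.
have HRn : #|R| <= n by rewrite -[X in _ <= X]card_ord max_card.
have HR'n : #|R'| <= n by rewrite -[X in _ <= X]card_ord max_card.
case: (Hs (col R)) => [H | [i Hi]].
- have [i Hi] : exists i, majority_ball (col R') i.
    case: (ltngtP #|R'|.*2 n) => Hlt; last by rewrite Hlt eqxx in HR'.
    + have : 0 < #|~: R'| by rewrite card_compl; lia.
      case/card_gt0P => i Hi; exists i; rewrite /majority_ball class_card.
      move: Hi; rewrite inE => /negbTE ->; lia.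
    + have : 0 < #|R'| by lia.
      case/card_gt0P => i Hi; exists i; rewrite /majority_ball class_card Hi; lia.
  exact: (H _ Hc i Hi).
- have := Hi (col R) (fun _ _ => erefl).
  rewrite /majority_ball class_card; case: ifP => _; lia.
Qed.

Lemma cardE' n (A : {set 'I_n}) : #|A| = \sum_x (x \in A).
Proof. by rewrite -sum1_card big_mkcond /=; apply: eq_bigr => x _; case: (x \in A). Qed.

Lemma card_symd n (Q R Y : {set 'I_n}) :
  #|Q :&: symd R Y| + #|Q :&: Y :&: R| = #|Q :&: R| + #|Q :&: Y :\: R|.
Proof.
rewrite !cardE' -!big_split /=; apply: eq_bigr => x _; rewrite !inE.
by case: (x \in Q); case: (x \in R); case: (x \in Y).
Qed.

Lemma consistent_flip k n (S : seq {set 'I_n}) (R Y : {set 'I_n}) :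
  is_query_family k S ->
  (forall Q, Q \in S -> #|Q :&: symd R Y| = #|Q :&: R| \/
                        #|Q :&: symd R Y| + #|Q :&: R| = k) ->
  consistent S (col R) (col (symd R Y)).
Proof.
move=> Hk H Q HQ; rewrite !ans_col.
have cD : forall A : {set 'I_n}, #|Q :\: A| = k - #|Q :&: A|.
  move=> A; rewrite -(Hk Q HQ) -(cardsID A Q); lia.
have cI : forall A : {set 'I_n}, #|Q :&: A| <= k.
  move=> A; rewrite -(Hk Q HQ); apply: subset_leq_card; exact: subsetIl.
rewrite !cD; have := cI R; have := cI (symd R Y).
case: (H Q HQ) => E; [by rewrite E | lia].
Qed.

Lemma pick_sub (T : finType) (A : {set T}) m :
  m <= #|A| -> exists B : {set T}, B \subset A /\ #|B| = m.
Proof.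
elim: m => [|m IH] H; first by exists set0; rewrite sub0set cards0.
have [B [HB HBc]] := IH (ltnW H).
have : 0 < #|A :\: B| by rewrite cardsDS //; lia.
case/card_gt0P => x; rewrite inE => /andP [HxB HxA].
exists (x |: B); split; first by rewrite subUset sub1set HxA HB.
by rewrite cardsU1 (negbTE HxB) HBc.
Qed.

Lemma cardU_disj (T : finType) (A B : {set T}) :
  (forall x, x \in A -> x \in B -> False) -> #|A :|: B| = #|A| + #|B|.
Proof.
move=> H; rewrite cardsU.
have -> : A :&: B = set0.
  apply/setP => x; rewrite !inE; apply/negP => /andP [h1 h2]; exact: H x h1 h2.
by rewrite cards0 subn0.
Qed.

Lemma cardC' n (R : {set 'I_n}) : #|R| + #|~: R| = n.
Proof. by rewrite cardsC card_ord. Qed.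

Lemma build0 n (Y Rc : {set 'I_n}) N :
  Rc \subset Y -> #|Rc| <= N -> N <= #|Rc| + (n - #|Y|) ->
  exists R : {set 'I_n}, #|R| = N /\ R :&: Y = Rc.
Proof.
move=> HRc H1 H2.
have [RO [HRO HROc]] : exists RO : {set 'I_n}, RO \subset ~: Y /\ #|RO| = N - #|Rc|.
  apply: pick_sub; have := cardC' Y; lia.
exists (Rc :|: RO); split.
- rewrite cardU_disj ?HROc; first lia.
  move=> x h1 h2; move/subsetP: HRc => /(_ x h1) hy; move/subsetP: HRO => /(_ x h2).
  by rewrite inE hy.
- apply/setP => x; rewrite !inE.
  case hx: (x \in Rc); first by move/subsetP: HRc => /(_ x hx) ->.
  case hy: (x \in Y); rewrite ?andbF ?andbT //=.
  apply/negP => h; move/subsetP: HRO => /(_ x h); by rewrite inE hy.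
Qed.

Lemma card_QY n (Q Y : {set 'I_n}) (a b : 'I_n) h :
  #|Q| = h.*2.+2 -> Q :&: Y = [set a; b] -> a != b -> #|Q :\: Y| = h.*2.
Proof.
move=> HQ HQY Hab; have := cardsID Y Q; rewrite HQY cards2 Hab HQ; lia.
Qed.

Lemma build1 n (Y Rc Q : {set 'I_n}) (a b : 'I_n) h N :
  Rc \subset Y -> #|Q| = h.*2.+2 -> Q :&: Y = [set a; b] -> a != b ->
  a \in Rc -> b \in Rc ->
  #|Rc| + h <= N -> N <= #|Rc| + h + (n - #|Y :|: Q|) ->
  exists R : {set 'I_n}, #|R| = N /\ R :&: Y = Rc /\ #|Q :&: R| = h.+2.
Proof.
move=> HRc HQ HQY Hab Ha Hb H1 H2.
have HX := card_QY HQ HQY Hab.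
have [RX [HRX HRXc]] : exists RX : {set 'I_n}, RX \subset Q :\: Y /\ #|RX| = h.
  apply: pick_sub; lia.
have [RO [HRO HROc]] : exists RO : {set 'I_n}, RO \subset ~: (Y :|: Q) /\ #|RO| = N - #|Rc| - h.
  apply: pick_sub; have := cardC' (Y :|: Q); lia.
have sRc := subsetP HRc; have sRX := subsetP HRX; have sRO := subsetP HRO.
have hQa : (a \in Q) && (a \in Y) by rewrite -in_setI HQY !inE eqxx.
have hQb : (b \in Q) && (b \in Y) by rewrite -in_setI HQY !inE eqxx orbT.
exists (Rc :|: RX :|: RO); split; [|split].
- rewrite !cardU_disj ?HRXc ?HROc; first lia.
  + move=> x h1 h2; by move: (sRc x h1) (sRX x h2); rewrite !inE => ->.
  + move=> x; rewrite !inE => /orP [h1|h1] h2.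
    * by move: (sRc x h1) (sRO x h2); rewrite !inE => ->.
    * by move: (sRX x h1) (sRO x h2); rewrite !inE; case: (x \in Y); case: (x \in Q).
- apply/setP => x; rewrite !inE.
  case h1: (x \in Rc); first by rewrite (sRc x h1).
  case h2: (x \in RX); first by move: (sRX x h2); rewrite !inE => /andP [/negbTE ->].
  case h3: (x \in RO) => //=; by move: (sRO x h3); rewrite !inE negb_or => /andP [/negbTE ->].
- have -> : Q :&: (Rc :|: RX :|: RO) = [set a; b] :|: RX.
    apply/setP => x.
    have F : [&& (x \in Rc) ==> (x \in Y), (x \in RX) ==> (x \in Q) && (x \notin Y),
      (x \in RO) ==> (x \notin Y) && (x \notin Q),
      ((x \in Q) && (x \in Y)) == ((x == a) || (x == b)),
      (x == a) ==> (x \in Rc) & (x == b) ==> (x \in Rc)].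
      apply/and5P; split.
      + by apply/implyP => /sRc.
      + by apply/implyP => /sRX; rewrite !inE andbC.
      + by apply/implyP => /sRO; rewrite !inE negb_or.
      + by rewrite -in_setI HQY !inE.
      + by apply/andP; split; apply/implyP => /eqP ->.
    rewrite !inE; move: F.
    by case: (x \in Rc); case: (x \in RX); case: (x \in RO); case: (x \in Q);
      case: (x \in Y); case: (x == a); case: (x == b).
  rewrite cardU_disj ?cards2 ?Hab ?HRXc //.
  move=> x; rewrite !inE => /orP [/eqP ->|/eqP ->] /sRX; rewrite inE.
    by case/andP: hQa => _ ->.
  by case/andP: hQb => _ ->.
Qed.


Ltac reg3 x Y Q0 Q1 := rewrite ?inE; case: (x \in Y); case: (x \in Q0); case: (x \in Q1) => //.

Lemma build2 n (Y Rc Q0 Q1 : {set 'I_n}) (a0 b0 a1 b1 : 'I_n) h N :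
  Rc \subset Y -> #|Q0| = h.*2.+2 -> #|Q1| = h.*2.+2 ->
  Q0 :&: Y = [set a0; b0] -> a0 != b0 -> Q1 :&: Y = [set a1; b1] -> a1 != b1 ->
  a0 \in Rc -> b0 \in Rc -> a1 \in Rc -> b1 \in Rc ->
  #|Rc| + h.*2 <= N + #|(Q0 :\: Y) :&: (Q1 :\: Y)| -> #|Rc| + h <= N ->
  #|Y| + h <= N + #|Rc| -> #|Y| + h.*2 <= N + #|Rc| + #|(Q0 :\: Y) :&: (Q1 :\: Y)| ->
  n = N.*2 ->
  exists R : {set 'I_n}, [/\ #|R| = N, R :&: Y = Rc, #|Q0 :&: R| = h.+2 & #|Q1 :&: R| = h.+2].
Proof.
move=> HRc HQ0 HQ1 HQY0 Hab0 HQY1 Hab1 Ha0 Hb0 Ha1 Hb1.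
set X0 := Q0 :\: Y; set X1 := Q1 :\: Y; set mu := #|X0 :&: X1| => H1 H2 H3 H4 Hn.
have HX0 : #|X0| = h.*2 by exact: card_QY HQ0 HQY0 Hab0.
have HX1 : #|X1| = h.*2 by exact: card_QY HQ1 HQY1 Hab1.
have HA : #|X0 :\: X1| = h.*2 - mu by have := cardsID X1 X0; rewrite -/mu; lia.
have HB : #|X1 :\: X0| = h.*2 - mu by have := cardsID X0 X1; rewrite setIC -/mu; lia.
have Hmu : mu <= h.*2 by rewrite -HX0; apply: subset_leq_card; exact: subsetIl.
have HU : #|Y :|: Q0 :|: Q1| = #|Y| + (h.*2 + h.*2 - mu).
  have -> : Y :|: Q0 :|: Q1 = Y :|: (X0 :|: X1).
    by apply/setP => x; rewrite !inE; case: (x \in Y); case: (x \in Q0); case: (x \in Q1).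
  rewrite cardU_disj; last by move=> x; rewrite !inE; case: (x \in Y).
  rewrite cardsU HX0 HX1 -/mu; lia.
set r := maxn (mu - h) (#|Rc| + h.*2 - N).
have r1 : r <= mu by rewrite /r; clear -H1 Hmu; lia.
have r2 : r <= h by rewrite /r; clear -H2 Hmu; lia.
have r3 : mu <= h + r by rewrite /r; clear; lia.
have r4 : #|Rc| + h.*2 <= N + r by rewrite /r; clear; lia.
have r5 : N + r <= #|Rc| + h.*2 + (n - #|Y :|: Q0 :|: Q1|).
  rewrite HU /r; clear -H3 H4 Hmu Hn; lia.
have HUn : #|Y :|: Q0 :|: Q1| <= n.
  by rewrite -[X in _ <= X]card_ord; apply: max_card.
clearbody r.
have [RM [HRM HRMc]] : exists RM : {set 'I_n}, RM \subset X0 :&: X1 /\ #|RM| = r.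
  by apply: pick_sub; rewrite -/mu.
have [RA [HRA HRAc]] : exists RA : {set 'I_n}, RA \subset X0 :\: X1 /\ #|RA| = h - r.
  apply: pick_sub; rewrite HA; clear -r3 r2 Hmu; lia.
have [RB [HRB HRBc]] : exists RB : {set 'I_n}, RB \subset X1 :\: X0 /\ #|RB| = h - r.
  apply: pick_sub; rewrite HB; clear -r3 r2 Hmu; lia.
have [RO [HRO HROc]] : exists RO : {set 'I_n},
    RO \subset ~: (Y :|: Q0 :|: Q1) /\ #|RO| = N + r - (#|Rc| + h.*2).
  apply: pick_sub; have := cardC' (Y :|: Q0 :|: Q1); clear -r5 HUn; lia.
have fRc : forall x, x \in Rc -> x \in Y by move=> x /(subsetP HRc).
have fRM : forall x, x \in RM -> [&& x \in Q0, x \in Q1 & x \notin Y].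
  move=> x /(subsetP HRM); rewrite /X0 /X1; reg3 x Y Q0 Q1.
have fRA : forall x, x \in RA -> [&& x \in Q0, x \notin Q1 & x \notin Y].
  move=> x /(subsetP HRA); rewrite /X0 /X1; reg3 x Y Q0 Q1.
have fRB : forall x, x \in RB -> [&& x \notin Q0, x \in Q1 & x \notin Y].
  move=> x /(subsetP HRB); rewrite /X0 /X1; reg3 x Y Q0 Q1.
have fRO : forall x, x \in RO -> [&& x \notin Q0, x \notin Q1 & x \notin Y].
  move=> x /(subsetP HRO); reg3 x Y Q0 Q1.
have d1 : forall x, x \in Rc -> x \in RM -> False.
  move=> x hx hy; move: (fRc x hx) (fRM x hy); reg3 x Y Q0 Q1.
have d2 : forall x, x \in Rc :|: RM -> x \in RA -> False.
  move=> x hx hy; move: (fRA x hy); rewrite inE in hx; case/orP: hx => hx;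
    [move: (fRc x hx) | move: (fRM x hx)]; reg3 x Y Q0 Q1.
have d3 : forall x, x \in Rc :|: RM :|: RA -> x \in RB -> False.
  move=> x hx hy; move: (fRB x hy); rewrite !inE in hx; case/orP: hx => [/orP [hx|hx]|hx];
    [move: (fRc x hx) | move: (fRM x hx) | move: (fRA x hx)]; reg3 x Y Q0 Q1.
have d4 : forall x, x \in Rc :|: RM :|: RA :|: RB -> x \in RO -> False.
  move=> x hx hy; move: (fRO x hy); rewrite !inE in hx;
    case/orP: hx => [/orP [/orP [hx|hx]|hx]|hx];
    [move: (fRc x hx) | move: (fRM x hx) | move: (fRA x hx) | move: (fRB x hx)]; reg3 x Y Q0 Q1.
have IQ0 : forall P : {set 'I_n}, (forall x, x \in P -> x \notin Q0) -> Q0 :&: P = set0.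
  move=> P HP; apply/setP => x; rewrite !inE.
  by case hh: (x \in P); rewrite ?andbF // andbT; apply/negbTE/HP.
have SQ0 : forall P : {set 'I_n}, (forall x, x \in P -> x \in Q0) -> Q0 :&: P = P.
  move=> P HP; apply/setIidPr/subsetP => x; exact: HP.
have IQ1 : forall P : {set 'I_n}, (forall x, x \in P -> x \notin Q1) -> Q1 :&: P = set0.
  move=> P HP; apply/setP => x; rewrite !inE.
  by case hh: (x \in P); rewrite ?andbF // andbT; apply/negbTE/HP.
have SQ1 : forall P : {set 'I_n}, (forall x, x \in P -> x \in Q1) -> Q1 :&: P = P.
  move=> P HP; apply/setIidPr/subsetP => x; exact: HP.
have Rc0 : Q0 :&: Rc = [set a0; b0].
  rewrite -HQY0; apply/setP => x; rewrite !inE.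
  case hh: (x \in Rc); first by rewrite (fRc x hh).
  rewrite andbF; apply/esym/negbTE/negP => /andP [hq hy].
  have : x \in Q0 :&: Y by rewrite inE hq hy.
  by rewrite HQY0 !inE => /orP [/eqP e|/eqP e]; subst x; rewrite ?Ha0 ?Hb0 in hh.
have Rc1 : Q1 :&: Rc = [set a1; b1].
  rewrite -HQY1; apply/setP => x; rewrite !inE.
  case hh: (x \in Rc); first by rewrite (fRc x hh).
  rewrite andbF; apply/esym/negbTE/negP => /andP [hq hy].
  have : x \in Q1 :&: Y by rewrite inE hq hy.
  by rewrite HQY1 !inE => /orP [/eqP e|/eqP e]; subst x; rewrite ?Ha1 ?Hb1 in hh.
exists (Rc :|: RM :|: RA :|: RB :|: RO); split.
- rewrite (cardU_disj d4) (cardU_disj d3) (cardU_disj d2) (cardU_disj d1).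
  rewrite HRMc HRAc HRBc HROc; clear -r2 r4; lia.
- apply/setP => x; rewrite !inE.
  case hh: (x \in Rc); first by rewrite (fRc x hh).
  rewrite andbC; case hy: (x \in Y) => //=.
  have nRM : (x \in RM) = false by apply/negbTE/negP => /fRM; rewrite hy !andbF.
  have nRA : (x \in RA) = false by apply/negbTE/negP => /fRA; rewrite hy !andbF.
  have nRB : (x \in RB) = false by apply/negbTE/negP => /fRB; rewrite hy !andbF.
  have nRO : (x \in RO) = false by apply/negbTE/negP => /fRO; rewrite hy !andbF.
  by rewrite nRM nRA nRB nRO.
- have fab : forall x, x \in [set a0; b0] -> x \in Y.
    by move=> x; rewrite -HQY0 inE => /andP [].
  have q0RM : forall x, x \in RM -> x \in Q0 by move=> x /fRM /and3P [].
  have q0RA : forall x, x \in RA -> x \in Q0 by move=> x /fRA /and3P [].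
  have n0RB : forall x, x \in RB -> x \notin Q0 by move=> x /fRB /and3P [].
  have n0RO : forall x, x \in RO -> x \notin Q0 by move=> x /fRO /and3P [].
  rewrite !setIUr Rc0 (SQ0 RM q0RM) (SQ0 RA q0RA) (IQ0 RB n0RB) (IQ0 RO n0RO) !setU0.
  have e1 : forall x, x \in [set a0; b0] -> x \in RM -> False.
    move=> x hx hy; move: (fab x hx) (fRM x hy); reg3 x Y Q0 Q1.
  have e2 : forall x, x \in [set a0; b0] :|: RM -> x \in RA -> False.
    move=> x hx hy; move: (fRA x hy); rewrite inE in hx; case/orP: hx => hx;
      [move: (fab x hx) | move: (fRM x hx)]; reg3 x Y Q0 Q1.
  rewrite (cardU_disj e2) (cardU_disj e1) cards2 Hab0 HRMc HRAc; clear -r2; lia.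
- have fab : forall x, x \in [set a1; b1] -> x \in Y.
    by move=> x; rewrite -HQY1 inE => /andP [].
  have q1RM : forall x, x \in RM -> x \in Q1 by move=> x /fRM /and3P [].
  have q1RB : forall x, x \in RB -> x \in Q1 by move=> x /fRB /and3P [].
  have n1RA : forall x, x \in RA -> x \notin Q1 by move=> x /fRA /and3P [].
  have n1RO : forall x, x \in RO -> x \notin Q1 by move=> x /fRO /and3P [].
  rewrite !setIUr Rc1 (SQ1 RM q1RM) (IQ1 RA n1RA) (SQ1 RB q1RB) (IQ1 RO n1RO) !setU0.
  have e1 : forall x, x \in [set a1; b1] -> x \in RM -> False.
    move=> x hx hy; move: (fab x hx) (fRM x hy); reg3 x Y Q0 Q1.
  have e2 : forall x, x \in [set a1; b1] :|: RM -> x \in RB -> False.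
    move=> x hx hy; move: (fRB x hy); rewrite inE in hx; case/orP: hx => hx;
      [move: (fab x hx) | move: (fRM x hx)]; reg3 x Y Q0 Q1.
  rewrite (cardU_disj e2) (cardU_disj e1) cards2 Hab1 HRMc HRBc; clear -r2; lia.
Qed.

Definition is_cycle (V E : finType) (inc : E -> V -> bool) (F : {set E})
  (m : nat) (u : nat -> V) (e : nat -> E) :=
  [/\ 2 <= m, (forall t, t < m -> [&& e t \in F, inc (e t) (u t) & inc (e t) (u t.+1)]),
      u m = u 0, (forall s t, s < m -> t < m -> u s = u t -> s = t) &
      (forall t, t.+1 < m -> e t != e t.+1)].

Lemma walk_cycle (V E : finType) (inc : E -> V -> bool) (F : {set E}) (W : {set V}) :
  (forall e, e \in F -> #|[set v | inc e v]| = 2) ->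
  (forall e v, e \in F -> inc e v -> v \in W) ->
  (forall w, w \in W -> 1 < #|[set e in F | inc e w]|) ->
  0 < #|W| ->
  exists m u e, is_cycle inc F m u e.
Proof.
move=> H2 HW Hdeg HW0.
pose other (e : E) (v : V) := odflt v [pick v' | inc e v' && (v' != v)].
pose nexte (v : V) (e : E) := odflt e [pick e' in F | inc e' v && (e' != e)].
pose step (p : V * E) := let e' := nexte p.1 p.2 in (other e' p.1, e').
pose I (p : V * E) := [&& p.1 \in W, p.2 \in F & inc p.2 p.1].
have Hstep : forall p, I p -> [&& I (step p), inc (step p).2 p.1,
                              (step p).1 != p.1 & (step p).2 != p.2].
  case=> v e /and3P /= [hv he hi].
  have [e' He'] : exists e', e' \in [set e' in F | inc e' v] :\ e.
    apply/set0Pn; rewrite -card_gt0; have := Hdeg v hv.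
    rewrite (cardsD1 e) inE he hi /=; lia.
  rewrite !inE in He'; case/and3P: He' => ne' he' hie'.
  have Hn : nexte v e \in F /\ inc (nexte v e) v /\ nexte v e != e.
    rewrite /nexte; case: pickP => [x /andP [hx /andP [h1 h2]] | /(_ e')] /=.
      by [].
    by rewrite he' hie' ne'.
  case: Hn => hnF [hnv hne].
  set e2 := nexte v e in hnF hnv hne *.
  have [v' Hv'] : exists v', v' \in [set v' | inc e2 v'] :\ v.
    apply/set0Pn; rewrite -card_gt0; have := H2 e2 hnF.
    rewrite (cardsD1 v) inE hnv /=; lia.
  rewrite !inE in Hv'; case/andP: Hv' => nv' hv'.
  have Ho : inc e2 (other e2 v) /\ other e2 v != v.
    rewrite /other; case: pickP => [x /andP [h1 h2] | /(_ v')] /=; first by [].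
    by rewrite hv' nv'.
  case: Ho => ho1 ho2.
  rewrite /step /= -/e2 /I /= ho1 hnF hnv ho2 hne andbT /=.
  by rewrite !andbT; exact: HW hnF ho1.
have [w0 Hw0] : exists w0, w0 \in W by apply/set0Pn; rewrite -card_gt0.
have [e0 He0] : exists e0, e0 \in [set e in F | inc e w0].
  by apply/set0Pn; rewrite -card_gt0; have := Hdeg w0 Hw0; lia.
rewrite inE in He0.
pose walk t := iter t step (w0, e0).
have HI : forall t, I (walk t).
  elim=> [|t IH]; first by rewrite /I /= Hw0 He0.
  by rewrite /walk iterS; case/and4P: (Hstep _ IH).
have HS : forall t, [&& inc (walk t.+1).2 (walk t).1, (walk t.+1).1 != (walk t).1
                      & (walk t.+1).2 != (walk t).2].
  by move=> t; rewrite /walk iterS; case/and4P: (Hstep _ (HI t)) => _ -> -> ->.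
pose P j := [exists i : 'I_j, (walk i).1 == (walk j).1].
have exP : exists j, P j.
  pose f (i : 'I_(#|V|.+1)) := (walk i).1.
  have : ~~ injectiveb f.
    apply/negP => /injectiveP Hinj; have := leq_card f Hinj; rewrite card_ord; lia.
  case/injectivePn => i [j] ne fe.
  case: (ltngtP i j) => hij.
  - exists j; apply/existsP; exists (Ordinal hij); apply/eqP; exact: fe.
  - exists i; apply/existsP; exists (Ordinal hij); apply/eqP; exact: (esym fe).
  - by move/val_inj: hij => hij; rewrite hij eqxx in ne.
case: (ex_minnP exP) => j0 /existsP [i0 /eqP Hi0] Hmin.
exists (j0 - i0), (fun t => (walk (i0 + t)).1), (fun t => (walk (i0 + t).+1).2).
have Hi0j0 : i0 < j0 := ltn_ord i0.
split.
- case: (ltngtP (j0 - i0) 1) => h; first lia.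
  + lia.
  + have e1 : j0 = i0.+1 by lia.
    by move: (HS i0); rewrite -e1 Hi0 eqxx andbF.
- move=> t ht /=; rewrite addnS; case/and3P: (HI (i0 + t).+1) => _ -> ->.
  by case/and3P: (HS (i0 + t)) => ->.
- by rewrite subnKC ?addn0 //; lia.
- move=> s t hs ht /= e.
  case: (ltngtP s t) => // hst.
  + have : P (i0 + t).
      apply/existsP; have hh : i0 + s < i0 + t by lia.
      by exists (Ordinal hh); rewrite /= e.
    move/Hmin; lia.
  + have : P (i0 + s).
      apply/existsP; have hh : i0 + t < i0 + s by lia.
      by exists (Ordinal hh); rewrite /= e.
    move/Hmin; lia.
- move=> t ht /=; rewrite addnS; case/and3P: (HS (i0 + t).+1) => _ _ h.
  by rewrite eq_sym.
Qed.

Lemma is_cycle_sub (V E : finType) (inc : E -> V -> bool) (F F' : {set E}) m u e :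
  F' \subset F -> is_cycle inc F' m u e -> is_cycle inc F m u e.
Proof.
move=> sF [h1 h2 h3 h4 h5]; split => // t ht.
by case/and3P: (h2 t ht) => /(subsetP sF) -> -> ->.
Qed.

Lemma cycle_exists (V E : finType) (inc : E -> V -> bool) (F : {set E}) (W : {set V}) :
  (forall e, e \in F -> #|[set v | inc e v]| = 2) ->
  (forall e v, e \in F -> inc e v -> v \in W) ->
  #|W| <= #|F| -> 0 < #|W| ->
  exists m u e, is_cycle inc F m u e.
Proof.
move=> H2; move: {2}#|W| (leqnn #|W|) => N; elim: N W F H2 => [|N IH] W F H2 HN HW HWF HW0.
  lia.
case: (boolP [exists w in W, #|[set e in F | inc e w]| <= 1]); last first.
  move=> Hn; apply: walk_cycle H2 HW _ HW0 => w hw.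
  move/existsPn: Hn => /(_ w); rewrite hw /=; lia.
case/existsP => w /andP [hw hdw].
pose F' := [set e in F | ~~ inc e w].
have HF : #|F| = #|F'| + #|[set e in F | inc e w]|.
  rewrite -(cardsID [set e | inc e w] F) addnC; congr (_ + _); apply: eq_card => x;
    by rewrite !inE andbC.
have HW2 : 1 < #|W|.
  case: (ltngtP #|W| 1) => // h; first lia.
  have [e he] : exists e, e \in F by apply/set0Pn; rewrite -card_gt0; lia.
  have : [set v | inc e v] \subset W.
    by apply/subsetP => v; rewrite inE; exact: HW.
  move/subset_leq_card; rewrite (H2 e he) h; lia.
have [m [u [e Hc]]] : exists m u e, is_cycle inc F' m u e.
  apply: (IH (W :\ w) F').
  - by move=> e; rewrite /F' inE => /andP [he _]; exact: H2.
  - rewrite (cardsD1 w) hw in HN; lia.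
  - move=> e v; rewrite /F' !inE => /andP [he hn] hv; rewrite (HW e v he hv) andbT.
    by apply/negP => /eqP ev; subst v; rewrite hv in hn.
  - rewrite (cardsD1 w) hw in HWF; lia.
  - rewrite (cardsD1 w) hw in HW2; lia.
exists m, u, e; apply: is_cycle_sub Hc.
by apply/subsetP => x; rewrite inE => /andP [].
Qed.

Definition T n (S : seq {set 'I_n}) (j : 'I_(size S)) := nth set0 S j.
Arguments T {n} S j.

Lemma T_in n (S : seq {set 'I_n}) j : T S j \in S.
Proof. by rewrite /T mem_nth. Qed.

Lemma consistent_idx n (S : seq {set 'I_n}) c c' :
  (forall j : 'I_(size S), cm_answer c' (T S j) = cm_answer c (T S j)) -> consistent S c c'.
Proof.
move=> H Q HQ; have hi : index Q S < size S by rewrite index_mem.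
by have := H (Ordinal hi); rewrite /T /= nth_index.
Qed.

Lemma pair_cap n (R : {set 'I_n}) (a b : 'I_n) : a != b ->
  #|[set a; b] :&: R| = (a \in R) + (b \in R) /\
  #|[set a; b] :\: R| = (a \notin R) + (b \notin R).
Proof.
move=> hab; have hba : b != a by rewrite eq_sym.
have E1 : forall P : pred 'I_n, [set x in [set a; b] | P x] =
   if P a then (if P b then [set a; b] else [set a]) else (if P b then [set b] else set0).
  move=> P; apply/setP => x; rewrite !inE.
  case: (eqVneq x a) => [->|xa] /=; first by case: (P a); case: (P b); rewrite !inE ?eqxx ?(negbTE hab).
  case: (eqVneq x b) => [->|xb] /=; first by case: (P a); case: (P b); rewrite !inE ?eqxx ?(negbTE hba).
  by case: (P a); case: (P b); rewrite !inE ?(negbTE xa) ?(negbTE xb).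
have -> : [set a; b] :&: R = [set x in [set a; b] | x \in R].
  by apply/setP => x; rewrite !inE.
have -> : [set a; b] :\: R = [set x in [set a; b] | x \notin R].
  by apply/setP => x; rewrite !inE andbC.
rewrite !E1; case: (a \in R); case: (b \in R); by rewrite /= ?cards2 ?cards1 ?cards0 ?hab.
Qed.

Lemma gen_fail k n (S : seq {set 'I_n}) h N (R Y : {set 'I_n}) :
  successful k S -> k = h.*2.+2 -> n = N.*2 -> #|R| = N ->
  #|Y :&: R| != #|Y :\: R| ->
  (forall j : 'I_(size S),
     T S j :&: Y = set0 \/
     (exists a b, [/\ T S j :&: Y = [set a; b], a != b & (a \in R) != (b \in R)]) \/
     (exists a b, [/\ T S j :&: Y = [set a; b], a != b, a \in R, b \in R & #|T S j :&: R| = h.+2])) ->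
  False.
Proof.
move=> Hs Hk Hn HR HY Hj.
apply: (fail_balance (R := R) (R' := symd R Y) Hs); first by rewrite HR Hn.
- have := card_symd setT R Y; rewrite !setTI HR => E.
  apply/negP => /eqP E2; apply: (negP HY); apply/eqP; clear -E E2 Hn; lia.
- apply: consistent_flip (proj1 Hs) _ => Q HQ.
  have hi : index Q S < size S by rewrite index_mem.
  have EQ : Q = T S (Ordinal hi) by rewrite /T /= nth_index.
  have HQk : #|Q| = k by apply: (proj1 Hs).
  have := card_symd Q R Y; rewrite EQ; rewrite EQ in HQk.
  case: (Hj (Ordinal hi)) => [-> | [[a [b [E hab hR]]] | [a [b [E hab ha hb hc]]]]].
  + rewrite set0I cards0 set0D cards0 !addn0 => ->; by left.
  + have [c1 c2] := pair_cap R hab; rewrite E c1 c2 => E3; left.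
    move: hR E3; case: (a \in R); case: (b \in R) => //= _; lia.
  + have [c1 c2] := pair_cap R hab; rewrite E c1 c2 ha hb hc => E3; right.
    move: E3 HQk; rewrite Hk /=; lia.
Qed.

Definition inc n (S : seq {set 'I_n}) (x : 'I_n) (j : 'I_(size S)) := x \in T S j.
Definition J n (S : seq {set 'I_n}) (x : 'I_n) := [set j : 'I_(size S) | x \in T S j].
Definition F2 n (S : seq {set 'I_n}) := [set x : 'I_n | #|J S x| == 2].
Arguments inc {n} S x j.

Definition prv (m s : nat) := if s is s'.+1 then s' else m.-1.

Lemma set2_eq (X : finType) (A : {set X}) a b :
  #|A| = 2 -> a \in A -> b \in A -> a != b -> A = [set a; b].
Proof.
move=> hA ha hb hab; apply/esym/eqP; rewrite eqEcard cards2 hab hA leqnn andbT.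
by apply/subsetP => x; rewrite !inE => /orP [/eqP ->|/eqP ->].
Qed.

Lemma cyc_struct n (S : seq {set 'I_n}) m u e :
  is_cycle (inc S) (F2 S) m u e ->
  [/\ (forall t, t < m -> J S (e t) = [set u t; u t.+1]),
      (forall s t, s < m -> t < m -> e s = e t -> s = t),
      (forall s t, s < m -> t < m -> (u s == u t.+1) = (t == prv m s)) &
      (forall s, s < m -> e s != e (prv m s))].
Proof.
case=> hm hc hu0 hinj hcons.
have hnext : forall t, t < m -> u t != u t.+1.
  move=> t ht; apply/negP => /eqP E.
  case: (ltngtP t.+1 m) => h; last first.
  - move: E; rewrite h hu0 => E; have := hinj _ _ ht (ltnW hm) E; lia.
  - lia.
  - have := hinj _ _ ht h E; lia.
have HJ : forall t, t < m -> J S (e t) = [set u t; u t.+1].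
  move=> t ht; case/and3P: (hc t ht) => hF h1 h2.
  apply: set2_eq; rewrite ?inE //; last exact: hnext.
  by move: hF; rewrite inE => /eqP.
have Hs : forall s t, s < m -> t < m -> (u s == u t.+1) = (t == prv m s).
  move=> s t hs ht; apply/eqP/eqP => [E|->].
  - case: (ltngtP t.+1 m) => h; last first.
    + move: E; rewrite h hu0 => /(hinj _ _ hs (ltnW hm)) ->; rewrite /prv; lia.
    + lia.
    + move/(hinj _ _ hs h): E => ->; by [].
  - case: s hs => [|s] hs /=.
    + rewrite prednK ?hu0 //; lia.
    + by [].
have He : forall s t, s < m -> t < m -> e s = e t -> s = t.
  move=> s t hs ht E; have := HJ s hs; rewrite E (HJ t ht) => E2.
  have : u s \in [set u t; u t.+1] by rewrite E2 !inE eqxx.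
  rewrite !inE => /orP [/eqP /(hinj _ _ hs ht) //|/eqP E3].
  have : u s.+1 \in [set u t; u t.+1] by rewrite E2 !inE eqxx orbT.
  rewrite !inE => /orP [/eqP E4|/eqP E4].
  +
    have := Hs s t hs ht; rewrite E3 eqxx => /esym/eqP ht1.
    have := Hs t s ht hs; rewrite E4 eqxx => /esym/eqP hs1.
    move: ht1 hs1; rewrite /prv; case: s hs E {E3 E4 E2} => [|s] hs E; case: t ht E => [|t] ht E /=.
    * lia.
    * move=> h1 h2; have h3 : t = 0 by lia.
      by subst t; move: (hcons 0 hm); rewrite E eqxx.
    * move=> h1 h2; have h3 : s = 0 by lia.
      by subst s; move: (hcons 0 hm); rewrite E eqxx.
    * lia.
  + by move: (hnext s hs); rewrite E3 E4 eqxx.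
split => //.
move=> s hs; apply/negP => /eqP E.
have hp : prv m s < m by rewrite /prv; case: s hs {E} => [|s] hs; lia.
have := He _ _ hs hp E; rewrite /prv; case: s hs hp {E} => [|s] hs hp; lia.
Qed.

Lemma card_ordP m (P : pred nat) : #|[set t : 'I_m | P t]| = \sum_(t < m) P t.
Proof.
rewrite -sum1_card big_mkcond /=; apply: eq_bigr => t _; rewrite inE; by case: (P t).
Qed.

Lemma sum_odd m : \sum_(t < m) odd t = m./2.
Proof.
elim: m => [|m IH]; first by rewrite big_ord0.
by rewrite big_ord_recr /= IH uphalf_half addnC.
Qed.

Lemma card_even m : #|[set t : 'I_m | ~~ odd t]| = m - m./2.
Proof.
have := card_ordP m odd; rewrite sum_odd => h.
have := cardsC [set t : 'I_m | odd t]; rewrite card_ord h => h2.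
have -> : [set t : 'I_m | ~~ odd t] = ~: [set t : 'I_m | odd t].
  by apply/setP => t; rewrite !inE.
lia.
Qed.

Lemma card_zodd m : 0 < m -> #|[set t : 'I_m | (nat_of_ord t == 0) || odd t]| = m./2 + 1.
Proof.
move=> hm; rewrite (card_ordP m (fun t => (t == 0) || odd t)); case: m hm => // m _.
have := sum_odd m.+1; rewrite !big_ord_recl /= => <-.
rewrite add0n addnC; congr (_ + _); apply: eq_bigr => i _; by rewrite /bump.
Qed.


Lemma img_mem n m (e : nat -> 'I_n) (P : pred nat) t :
  (forall s t, s < m -> t < m -> e s = e t -> s = t) -> t < m ->
  (e t \in [set e (nat_of_ord s) | s : 'I_m & P s]) = P t.
Proof.
move=> He ht; apply/imsetP/idP => [[s hs E]|hP].
- rewrite inE in hs; by rewrite (He _ _ ht (ltn_ord s) E).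
- by exists (Ordinal ht); rewrite ?inE.
Qed.

Lemma Y_vert n (S : seq {set 'I_n}) m u e s :
  is_cycle (inc S) (F2 S) m u e -> s < m ->
  T S (u s) :&: [set e (nat_of_ord t) | t : 'I_m] = [set e s; e (prv m s)].
Proof.
move=> Hc hs; have [HJ He Hs Hp] := cyc_struct Hc.
have hp : prv m s < m by rewrite /prv; case: s hs {Hp} => [|s] hs; case: Hc; lia.
have memT : forall x j, (x \in T S j) = (j \in J S x) by move=> x j; rewrite inE.
apply/setP => x; rewrite !inE; apply/andP/orP.
- case=> hx /imsetP [t _ Ex]; subst x.
  move: hx; rewrite memT (HJ t (ltn_ord t)) !inE => /orP [/eqP E|/eqP E].
  + case: Hc => _ _ _ hinj _; left; by rewrite (hinj _ _ hs (ltn_ord t) E).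
  + right; move/eqP: E; rewrite (Hs s t hs (ltn_ord t)) => /eqP ->; by [].
- case=> /eqP ->; split.
  + by rewrite memT (HJ s hs) !inE eqxx.
  + by apply/imsetP; exists (Ordinal hs).
  + by rewrite memT (HJ _ hp) !inE (Hs s _ hs hp) eqxx orbT.
  + by apply/imsetP; exists (Ordinal hp).
Qed.

Lemma Y_non n (S : seq {set 'I_n}) m u e j :
  is_cycle (inc S) (F2 S) m u e -> (forall s, s < m -> j != u s) ->
  T S j :&: [set e (nat_of_ord t) | t : 'I_m] = set0.
Proof.
move=> Hc Hj; have [HJ He Hs Hp] := cyc_struct Hc.
apply/setP => x; rewrite !inE; apply/negbTE/negP => /andP [hx /imsetP [t _ Ex]]; subst x.
have : j \in J S (e t) by rewrite inE.
rewrite (HJ t (ltn_ord t)) !inE => /orP [/eqP E|/eqP E].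
- by move: (Hj t (ltn_ord t)); rewrite E eqxx.
- case: (ltngtP t.+1 m) => h.
  + by move: (Hj _ h); rewrite E eqxx.
  + have := ltn_ord t; lia.
  + case: Hc => hm _ hu0 _ _; move: (Hj 0 (ltnW hm)); by rewrite E h hu0 eqxx.
Qed.

Lemma card_Y n m (e : nat -> 'I_n) :
  (forall s t, s < m -> t < m -> e s = e t -> s = t) ->
  #|[set e (nat_of_ord t) | t : 'I_m]| = m.
Proof.
move=> He; rewrite card_imset ?card_ord // => s t E; apply: val_inj.
exact: He (ltn_ord s) (ltn_ord t) E.
Qed.

Lemma card_Rc n m (e : nat -> 'I_n) (P : pred nat) :
  (forall s t, s < m -> t < m -> e s = e t -> s = t) ->
  #|[set e (nat_of_ord t) | t : 'I_m & P t]| = #|[set t : 'I_m | P t]|.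
Proof.
move=> He; rewrite card_in_imset // => s t _ _ E; apply: val_inj.
exact: He (ltn_ord s) (ltn_ord t) E.
Qed.

Lemma memR n (R Y Rc : {set 'I_n}) x : R :&: Y = Rc -> x \in Y -> (x \in R) = (x \in Rc).
Proof. by move=> <- hx; rewrite inE hx andbT. Qed.

Lemma cardYQ n (Y Q : {set 'I_n}) : #|Y :|: Q| = #|Y| + #|Q :\: Y|.
Proof.
have -> : Y :|: Q = Y :|: (Q :\: Y).
  by apply/setP => x; rewrite !inE; case: (x \in Y).
by rewrite cardU_disj // => x; rewrite !inE => ->.
Qed.

Lemma card_le_n n (A : {set 'I_n}) : #|A| <= n.
Proof. by rewrite -[X in _ <= X]card_ord; apply: max_card. Qed.

Lemma cycle_fail_odd k n (S : seq {set 'I_n}) h N m u e :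
  successful k S -> k = h.*2.+2 -> n = N.*2 ->
  is_cycle (inc S) (F2 S) m u e -> odd m -> False.
Proof.
move=> Hs Hk Hn Hc Hodd.
have [HJ He Hs' Hp] := cyc_struct Hc.
case: (Hc) => hm _ _ _ _.
set Y := [set e (nat_of_ord t) | t : 'I_m].
set Rc := [set e (nat_of_ord t) | t : 'I_m & ~~ odd t].
have hY : #|Y| = m := card_Y He.
have hRc : #|Rc| = m - m./2 by rewrite /Rc (@card_Rc n m e (fun t => ~~ odd t) He) card_even.
have sRc : Rc \subset Y.
  by apply/subsetP => x /imsetP [t _ ->]; apply/imsetP; exists t.
have m0 : 0 < m by lia.
have E0 : T S (u 0) :&: Y = [set e 0; e m.-1] by exact: (Y_vert Hc m0).
have hab : e 0 != e m.-1 := Hp 0 m0.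
have hm1 : m.-1 < m by lia.
have ha : e 0 \in Rc by rewrite /Rc (@img_mem n m e (fun t => ~~ odd t) 0 He m0).
have hb : e m.-1 \in Rc by rewrite /Rc (@img_mem n m e (fun t => ~~ odd t) _ He hm1); move: Hodd; rewrite -{1}(prednK m0).
have HQ : #|T S (u 0)| = h.*2.+2 by rewrite -Hk; apply: (proj1 Hs); exact: T_in.
have HYQ : #|Y :|: T S (u 0)| = m + h.*2 by rewrite cardYQ hY (card_QY HQ E0 hab).
have Hle := card_le_n (Y :|: T S (u 0)).
have hm2 : m = (m./2).*2.+1 by rewrite -[X in X = _]odd_double_half Hodd.
have [R [HR1 [HR2 HR3]]] := build1 sRc HQ E0 hab ha hb
  (N := N) (ltac:(rewrite hRc; move: Hle; rewrite HYQ; clear -hm2 Hn; lia))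
  (ltac:(rewrite hRc HYQ; move: Hle; rewrite HYQ; clear -hm2 Hn; lia)).
apply: (gen_fail (R := R) (Y := Y) Hs Hk Hn HR1).
- rewrite setIC HR2; have := cardsID R Y; rewrite setIC HR2 hRc hY.
  clear -hm2; lia.
- have yin : forall t, t < m -> e t \in Y by move=> t ht; apply/imsetP; exists (Ordinal ht).
  move=> j; case: (boolP [exists s : 'I_m, j == u s]).
  + case/existsP => s /eqP ->; case: s => [[|s] hs] /=.
    * right; right; exists (e 0), (e m.-1); split => //.
      - by rewrite (memR HR2 (yin 0 m0)).
      - by rewrite (memR HR2 (yin _ hm1)).
    * right; left; exists (e s.+1), (e s); split.
      - exact: (Y_vert Hc hs).
      - exact: (Hp _ hs).
      - have hs' : s < m by lia.
        rewrite (memR HR2 (yin _ hs)) (memR HR2 (yin _ hs')) /Rc.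
        rewrite (@img_mem n m e (fun t => ~~ odd t) _ He hs).
        rewrite (@img_mem n m e (fun t => ~~ odd t) _ He hs') /=.
        by case: (odd s).
  + move=> H; left; apply: (Y_non Hc) => s hs; apply/negP => /eqP E.
    by move/existsP: H; apply; exists (Ordinal hs); rewrite E.
Qed.

Lemma cycle_fail_even k n (S : seq {set 'I_n}) h N m u e :
  successful k S -> k = h.*2.+2 -> n = N.*2 ->
  is_cycle (inc S) (F2 S) m u e -> ~~ odd m ->
  m./2 + 1 + h.*2 <= N + #|(T S (u 0) :\: [set e (nat_of_ord t) | t : 'I_m]) :&:
                           (T S (u 1) :\: [set e (nat_of_ord t) | t : 'I_m])| ->
  m./2 + 1 + h <= N -> False.
Proof.
move=> Hs Hk Hn Hc Hev.
have [HJ He Hs' Hp] := cyc_struct Hc.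
case: (Hc) => hm _ _ _ _.
set Y := [set e (nat_of_ord t) | t : 'I_m] => Hmu H2.
pose P := fun t : nat => (t == 0) || odd t.
set Rc := [set e (nat_of_ord t) | t : 'I_m & P t].
have hY : #|Y| = m := card_Y He.
have m0 : 0 < m by lia.
have m1 : 1 < m by lia.
have hm1 : m.-1 < m by lia.
have hRc : #|Rc| = m./2 + 1 by rewrite /Rc (@card_Rc n m e P He) card_zodd.
have sRc : Rc \subset Y.
  by apply/subsetP => x /imsetP [t _ ->]; apply/imsetP; exists t.
have yin : forall t, t < m -> e t \in Y by move=> t ht; apply/imsetP; exists (Ordinal ht).
have rin : forall t, t < m -> (e t \in Rc) = P t.
  by move=> t ht; rewrite /Rc (@img_mem n m e P _ He ht).
have E0 : T S (u 0) :&: Y = [set e 0; e m.-1] by exact: (Y_vert Hc m0).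
have E1 : T S (u 1) :&: Y = [set e 1; e 0] by exact: (Y_vert Hc m1).
have hab0 : e 0 != e m.-1 := Hp 0 m0.
have hab1 : e 1 != e 0 := Hp 1 m1.
have hm2 : m = (m./2).*2 by rewrite -[X in X = _]odd_double_half (negbTE Hev).
have ha0 : e 0 \in Rc by rewrite rin.
have hb0 : e m.-1 \in Rc by rewrite rin // /P; move: Hev; rewrite -{1}(prednK m0) /= negbK => ->; rewrite orbT.
have ha1 : e 1 \in Rc by rewrite rin.
have HQ0 : #|T S (u 0)| = h.*2.+2 by rewrite -Hk; apply: (proj1 Hs); exact: T_in.
have HQ1 : #|T S (u 1)| = h.*2.+2 by rewrite -Hk; apply: (proj1 Hs); exact: T_in.
have [R [HR1 HR2 HR3 HR4]] := build2 (h := h) (N := N) sRc HQ0 HQ1 E0 hab0 E1 hab1 ha0 hb0 ha1 ha0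
  (ltac:(rewrite hRc; clear -Hmu; lia)) (ltac:(rewrite hRc; clear -H2; lia))
  (ltac:(rewrite hRc hY; clear -H2 hm2; lia)) (ltac:(rewrite hRc hY; clear -Hmu hm2; lia)) Hn.
apply: (gen_fail (R := R) (Y := Y) Hs Hk Hn HR1).
- rewrite setIC HR2; have := cardsID R Y; rewrite setIC HR2 hRc hY.
  clear -hm2 m1; lia.
- move=> j; case: (boolP [exists s : 'I_m, j == u s]).
  + case/existsP => s /eqP ->; case: s => [[|[|s]] hs] /=.
    * right; right; exists (e 0), (e m.-1); split => //.
      - by rewrite (memR HR2 (yin 0 m0)).
      - by rewrite (memR HR2 (yin _ hm1)).
    * right; right; exists (e 1), (e 0); split => //.
      - by rewrite (memR HR2 (yin 1 m1)).
      - by rewrite (memR HR2 (yin 0 m0)).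
    * right; left; exists (e s.+2), (e s.+1); split.
      - exact: (Y_vert Hc hs).
      - exact: (Hp _ hs).
      - have hs' : s.+1 < m by lia.
        rewrite (memR HR2 (yin _ hs)) (memR HR2 (yin _ hs')) (rin _ hs) (rin _ hs') /P /=.
        by case: (odd s).
  + move=> H; left; apply: (Y_non Hc) => s hs; apply/negP => /eqP E.
    by move/existsP: H; apply; exists (Ordinal hs); rewrite E.
Qed.

Lemma sum_deg k n (S : seq {set 'I_n}) :
  is_query_family k S -> \sum_x #|J S x| = size S * k.
Proof.
move=> Hk.
have -> : \sum_x #|J S x| = \sum_x \sum_(j : 'I_(size S)) (x \in T S j).
  apply: eq_bigr => x _; rewrite cardE' /J; apply: eq_bigr => j _; by rewrite inE.
rewrite exchange_big /=.
have -> : \sum_(j : 'I_(size S)) \sum_x (x \in T S j) = \sum_(j : 'I_(size S)) k.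
  apply: eq_bigr => j _; rewrite -cardE'; apply: Hk; exact: T_in.
by rewrite sum_nat_const card_ord.
Qed.

Lemma deg_bound k n (S : seq {set 'I_n}) :
  is_query_family k S -> (forall x, 0 < #|J S x|) ->
  n.*2 + n <= size S * k + (#|[set x | #|J S x| == 1]|).*2 + #|F2 S|.
Proof.
move=> Hk H0; rewrite -(sum_deg Hk).
have e1 : (#|[set x | #|J S x| == 1]|).*2 = \sum_x (2 * (x \in [set x | #|J S x| == 1])).
  by rewrite cardE' -mul2n big_distrr.
have e3 : n.*2 + n = \sum_(x : 'I_n) 3 by rewrite sum_nat_const card_ord; lia.
rewrite e1 cardE' -!big_split e3 /=; apply: leq_sum => x _; have := H0 x; rewrite !inE.
by case: #|J S x| => [|[|[|d]]].
Qed.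

Lemma deg0_fail k n (S : seq {set 'I_n}) h N x :
  successful k S -> k = h.*2.+2 -> n = N.*2 -> 0 < N -> #|J S x| = 0 -> False.
Proof.
move=> Hs Hk Hn HN Hx.
have [R [HR1 HR2]] := build0 (N := N) (subxx [set x]) (ltac:(rewrite cards1; lia))
  (ltac:(rewrite cards1 Hn; lia)).
apply: (gen_fail (R := R) (Y := [set x]) Hs Hk Hn HR1).
- have hx : x \in R by move: HR2 => /setP /(_ x); rewrite !inE eqxx andbT.
  have -> : [set x] :&: R = [set x] by apply/setP => y; rewrite !inE; case: eqP => [->|]; rewrite ?hx.
  have -> : [set x] :\: R = set0 by apply/setP => y; rewrite !inE; case: eqP => [->|]; rewrite ?hx ?andbF.
  by rewrite cards1 cards0.
- move=> j; left; apply/setP => y; rewrite !inE; case: eqP => [->|]; rewrite ?andbF //.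
  rewrite andbT; apply/negP => hj.
  have : j \in J S x by rewrite inE.
  move=> hj'; have : 0 < #|J S x| by apply/card_gt0P; exists j.
  by rewrite Hx.
Qed.

Lemma deg1_fail k n (S : seq {set 'I_n}) h N x w j0 :
  successful k S -> k = h.*2.+2 -> n = N.*2 -> h.+2 <= N -> x != w ->
  J S x = [set j0] -> J S w = [set j0] -> False.
Proof.
move=> Hs Hk Hn HN hxw Jx Jw.
have inT : forall y j, J S y = [set j0] -> (y \in T S j) = (j == j0).
  move=> y j Jy; have : (j \in J S y) = (y \in T S j) by rewrite inE.
  by rewrite Jy inE => <-.
set Y := [set x; w].
have HQ : #|T S j0| = h.*2.+2 by rewrite -Hk; apply: (proj1 Hs); exact: T_in.
have EQ : T S j0 :&: Y = [set x; w].
  apply/setIidPr/subsetP => y; rewrite !inE => /orP [/eqP ->|/eqP ->];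
    by rewrite ?(inT _ _ Jx) ?(inT _ _ Jw).
have hx : x \in Y by rewrite !inE eqxx.
have hw : w \in Y by rewrite !inE eqxx orbT.
have HYQ : #|Y :|: T S j0| = h.*2.+2.
  have -> : Y :|: T S j0 = T S j0.
    apply/setUidPr/subsetP => y; rewrite !inE => /orP [/eqP ->|/eqP ->];
      by rewrite ?(inT _ _ Jx) ?(inT _ _ Jw).
  exact: HQ.
have [R [HR1 [HR2 HR3]]] := build1 (N := N) (subxx Y) HQ EQ hxw hx hw
  (ltac:(rewrite cards2 hxw; clear -HN; lia))
  (ltac:(rewrite cards2 hxw HYQ Hn; clear -HN; lia)).
apply: (gen_fail (R := R) (Y := Y) Hs Hk Hn HR1).
- have -> : Y :&: R = Y by rewrite setIC HR2.
  have -> : Y :\: R = set0.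
    apply/setP => y; rewrite in_setD in_set0; case hy: (y \in Y); rewrite ?andbF //.
    by rewrite (memR HR2 hy) hy.
  by rewrite cards2 hxw cards0.
- move=> j; case: (eqVneq j j0) => [->|hj].
  + right; right; exists x, w; split => //.
    * by rewrite (memR HR2 hx).
    * by rewrite (memR HR2 hw).
  + left; apply/setP => y; rewrite !inE; apply/negbTE/negP => /andP [hy].
    by case/orP => /eqP E; subst y; move: hy; rewrite ?(inT _ _ Jx) ?(inT _ _ Jw) (negbTE hj).
Qed.

Lemma n1_le k n (S : seq {set 'I_n}) h N :
  successful k S -> k = h.*2.+2 -> n = N.*2 -> h.+2 <= N ->
  #|[set x | #|J S x| == 1]| <= size S.
Proof.
move=> Hs Hk Hn HN; set D := [set x | #|J S x| == 1].
pose f (x : 'I_n) := [pick j in J S x].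
have Hf : {in D &, injective f}.
  move=> x w; rewrite !inE => /cards1P [j1 Jx] /cards1P [j2 Jw].
  rewrite /f; case: pickP => [a ha|]; last by move/(_ j1); rewrite Jx inE eqxx.
  case: pickP => [b hb|]; last by move/(_ j2); rewrite Jw inE eqxx.
  move=> [eab]; subst b; move: ha hb; rewrite Jx Jw !inE => /eqP E1 /eqP E2.
  rewrite -E1 in Jx; rewrite -E2 in Jw.
  case: (eqVneq x w) => // hxw; exfalso; exact: (deg1_fail Hs Hk Hn HN hxw Jx Jw).
rewrite -(card_in_imset Hf).
have : f @: D \subset [set Some j | j : 'I_(size S)].
  apply/subsetP => o /imsetP [x hx ->]; rewrite /f; case: pickP => [j _|].
  - by apply/imsetP; exists j.
  - move: hx; rewrite inE => /cards1P [j1 Jx] /(_ j1); by rewrite Jx inE eqxx.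
have HS : #|[set Some j | j : 'I_(size S)]| = size S.
  rewrite card_imset ?card_ord //; by move=> a b [].
by move/subset_leq_card; rewrite HS.
Qed.

Lemma pigeon (X Y : finType) (D : {set X}) (P : {set Y}) (g : X -> Y) :
  (forall x, x \in D -> g x \in P) -> 0 < #|D| ->
  exists2 p, p \in P & #|D| <= #|P| * #|[set x in D | g x == p]|.
Proof.
move=> Hg HD.
have Hsum : #|D| = \sum_(p in P) #|[set x in D | g x == p]|.
  rewrite -sum1_card (partition_big g (fun p => p \in P)) //=.
  by apply: eq_bigr => p _; rewrite sum1dep_card.
case: (boolP [exists p in P, #|D| <= #|P| * #|[set x in D | g x == p]|]).
  by case/exists_inP => p hp h; exists p.
move/exists_inPn => H; exfalso.
have [x0 hx0] : exists x, x \in D by apply/card_gt0P.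
have hP : 0 < #|P| by apply/card_gt0P; exists (g x0); exact: Hg.
have : #|P| * #|D| <= #|P| * (#|D| - 1).
  rewrite {1}Hsum big_distrr /= -sum_nat_const.
  apply: leq_sum => p hp; have := H p hp; lia.
rewrite leq_mul2l; case/orP => [|]; lia.
Qed.

Lemma nk_fail n (S : seq {set 'I_n}) :
  2 < n -> successful n S -> False.
Proof.
move=> Hn [Hk Hs].
have HQ : forall Q, Q \in S -> Q = setT.
  move=> Q HQ; apply/eqP; rewrite eqEcard subsetT cardsT card_ord (Hk Q HQ) leqnn //.
pose x0 : 'I_n := Ordinal (ltnW (ltnW Hn)).
pose x1 : 'I_n := Ordinal (ltnW Hn).
have hx01 : x0 != x1 by [].
have cons1 : forall a b : 'I_n, consistent S (col [set a]) (col [set b]).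
  move=> a b Q hQ; rewrite !ans_col (HQ Q hQ) !setTI !setTD !cards1.
  by rewrite !cardsC1.
case: (Hs (col [set x0])) => [H | [i Hi]].
- apply: (H (col [set x0]) (fun _ _ => erefl) x1).
  rewrite /majority_ball class_card inE eq_sym (negbTE hx01) cards1; lia.
- have := Hi (col [set i]) (cons1 x0 i); rewrite /majority_ball class_card inE eqxx cards1; lia.
Qed.

Lemma even_split k : ~~ odd k -> 2 <= k -> exists h, k = h.*2.+2.
Proof.
move=> Hk H2; exists (k./2).-1.
have := odd_double_half k; rewrite (negbTE Hk) add0n => E.
rewrite -[X in X = _]E; have : 0 < k./2 by rewrite half_gt0.
case: (k./2) => // p _ /=; by rewrite doubleS.
Qed.

Lemma even_half n : ~~ odd n -> exists N, n = N.*2.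
Proof.
move=> Hn; exists n./2; have := odd_double_half n; rewrite (negbTE Hn) add0n; by move=> ->.
Qed.

Lemma small_arith q n1 n2 s k n h N :
  n2 <= 'C(q, 2) * s -> n.*2 + n <= q * k + n1.*2 + n2 -> n1 <= q -> q <= 4 ->
  5 * k * q < 11 * n -> 100 <= k -> h.+2 <= N -> k = h.*2.+2 -> n = N.*2 ->
  2 <= s /\ h.*2 + 4 <= N + s.
Proof.
case: q => [|[|[|[|[|q]]]]] //= H1 H2 H3 _ H4 H5 H6 H7 H8.
- rewrite (_ : 'C(0,2) = 0) // in H1; lia.
- rewrite (_ : 'C(1,2) = 0) // in H1; lia.
- rewrite (_ : 'C(2,2) = 1) // in H1; lia.
- rewrite (_ : 'C(3,2) = 3) // in H1; lia.
- rewrite (_ : 'C(4,2) = 6) // in H1; lia.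
Qed.

Lemma core k n (S : seq {set 'I_n}) :
  100 <= k -> ~~ odd k -> ~~ odd n -> successful k S -> 11 * n <= 5 * k * size S.
Proof.
move=> Hk100 Hk Hn Hs.
have [h Hkh] := even_split Hk (leq_trans (isT : 2 <= 100) Hk100).
have [N HnN] := even_half Hn.
case: (posnP N) => HN0.
  by apply: leq_trans (_ : 11 * n <= 0) _; [rewrite HnN HN0 | ].
have Hdeg : forall x, 0 < #|J S x|.
  move=> x; case: (posnP #|J S x|) => // H0; exfalso; exact: (deg0_fail Hs Hkh HnN HN0 H0).
have n0 : 0 < n by rewrite HnN; lia.
have Hq : 0 < size S.
  have := Hdeg (Ordinal n0); move/leq_trans; apply.
  by rewrite -[X in _ <= X]card_ord; apply: max_card.
have Hkn : k <= n.
  have := card_le_n (T S (Ordinal Hq)); rewrite (proj1 Hs) //; exact: T_in.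
case: (eqVneq n k) => Enk.
  exfalso; have h2k : 2 < n by lia.
  rewrite -Enk in Hs; exact: (nk_fail h2k Hs).
have HN2 : h.+2 <= N by move: Hkn Enk; rewrite HnN Hkh; lia.
have Hn1 := n1_le Hs Hkh HnN HN2.
have Hdb := deg_bound (proj1 Hs) Hdeg.
have Hk9 : 9 <= k by lia.
case: (leqP (size S + k.*2) n) => Hreg.
- have Hn2 : #|F2 S| < size S.
    rewrite ltnNge; apply/negP => H.
    have [m [u [e Hc]]] : exists m u e, is_cycle (inc S) (F2 S) m u e.
      apply: (cycle_exists (W := setT)).
      + by move=> x; rewrite inE => /eqP.
      + by move=> x v _ _; rewrite inE.
      + by rewrite cardsT card_ord.
      + by rewrite cardsT card_ord.
    have hm : m <= size S.
      case: (Hc) => _ _ _ hinj _.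
      have : #|[set u (nat_of_ord t) | t : 'I_m]| = m.
        rewrite card_imset ?card_ord // => s t E; apply: val_inj.
        exact: hinj (ltn_ord s) (ltn_ord t) E.
      move=> <-; rewrite -[X in _ <= X]card_ord; apply: max_card.
    have hm2 : (m./2).*2 <= m by rewrite -[X in _ <= X](odd_double_half m); lia.
    case: (boolP (odd m)) => Hodd; first exact: (cycle_fail_odd Hs Hkh HnN Hc Hodd).
    apply: (cycle_fail_even Hs Hkh HnN Hc Hodd).
    + apply: leq_trans (leq_addr _ _); clear -Hreg HnN Hkh hm hm2; lia.
    + clear -Hreg HnN Hkh hm hm2; lia.
  move: Hdb Hn1 Hn2 Hk9; clear; nia.
- rewrite leqNgt; apply/negP => Hlt.
  have q4 : size S <= 4.
    move: Hlt Hreg Hk100; clear; nia.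
  have Hn2pos : 0 < #|F2 S|.
    move: Hdb Hn1 q4 Hlt Hk100 Hkn Enk; clear; nia.
  have [A hA Hfib] := pigeon (D := F2 S) (P := [set A : {set 'I_(size S)} | #|A| == 2])
    (g := J S) (ltac:(by move=> x; rewrite !inE)) Hn2pos.
  rewrite card_draws card_ord in Hfib.
  set fib := [set x in F2 S | J S x == A] in Hfib.
  have [Hs2 Hs3] := small_arith Hfib Hdb Hn1 q4 Hlt Hk100 HN2 Hkh HnN.
  move: hA; rewrite inE => /cards2P [i [j [hij EA]]].
  have [y0 hy0] : exists y0, y0 \in fib by apply/card_gt0P; lia.
  have [y1 hy1] : exists y1, y1 \in fib :\ y0.
    apply/card_gt0P; move: Hs2 (cardsD1 y0 fib); rewrite hy0 /=; clear; lia.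
  have hy01 : y1 != y0 by move: hy1; rewrite !inE => /andP [].
  have fibJ : forall y, y \in fib -> J S y = [set i; j] /\ y \in F2 S.
    by move=> y; rewrite !inE => /andP [-> /eqP ->].
  have inTi : forall y, y \in fib -> (y \in T S i) && (y \in T S j).
    move=> y /fibJ [Jy _].
    have hi : i \in J S y by rewrite Jy !inE eqxx.
    have hj : j \in J S y by rewrite Jy !inE eqxx orbT.
    by rewrite !inE in hi hj; rewrite hi hj.
  have hy1' : y1 \in fib by move: hy1; rewrite inE => /andP [].
  pose u := fun t : nat => if t == 1 then j else i.
  pose e := fun t : nat => if t == 0 then y0 else y1.
  have Hc : is_cycle (inc S) (F2 S) 2 u e.
    split => //.
    - case=> [|[|t]] // _; rewrite /e /u /inc /=.
      + by case/fibJ: (hy0) => _ ->; case/andP: (inTi _ hy0) => -> ->.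
      + by case/fibJ: (hy1') => _ ->; case/andP: (inTi _ hy1') => -> ->.
    - case=> [|[|s]] [|[|t]] //= _ _; rewrite /u /=.
      + by move=> E; move: hij; rewrite E eqxx.
      + by move=> E; move: hij; rewrite E eqxx.
    - by case=> [|t] //= _; rewrite /e /= eq_sym.
  apply: (cycle_fail_even Hs Hkh HnN Hc (isT : ~~ odd 2)); last by rewrite /=; lia.
  set Y := [set e (nat_of_ord t) | t : 'I_2].
  have hY : #|Y| <= 2 by rewrite -[X in _ <= X](card_ord 2); apply: leq_imset_card.
  have sub : fib :\: Y \subset (T S (u 0) :\: Y) :&: (T S (u 1) :\: Y).
    apply/subsetP => y; rewrite !inE => /andP [hyY hyf].
    have := inTi y; rewrite !inE hyf => /(_ isT) /andP [h1 h2].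
    by rewrite /u /= hyY h1 h2.
  have := subset_leq_card sub; have := cardsID Y fib.
  have : #|fib :&: Y| <= #|Y| by apply: subset_leq_card; exact: subsetIr.
  rewrite /=; move: Hs3 hY; clearbody fib Y u; clear.
  set a := #|fib|; set b := #|Y|; set c := #|fib :&: Y|; set d := #|fib :\: Y|.
  set mu := #|(T S (u 0) :\: Y) :&: (T S (u 1) :\: Y)|; lia.
Qed.

Unset Implicit Arguments.
Import Order.TTheory GRing.Theory Num.Theory.

Lemma natB_ineq n q k i :
  k < 2 * i -> i < k -> 11 * n <= 5 * k * q ->
  n * (5 * i * k + i + i * i - k) <= q * ((2 * k + 3 + i) * i * k).
Proof.
move=> h1 h2 h3.
have HP : 5 * k * (5 * i * k + i + i * i - k) <= 11 * ((2 * k + 3 + i) * i * k) by nia.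
have : 5 * k * (n * (5 * i * k + i + i * i - k)) <= 5 * k * (q * ((2 * k + 3 + i) * i * k)).
  have e1 : 5 * k * (n * (5 * i * k + i + i * i - k)) = n * (5 * k * (5 * i * k + i + i * i - k)) by ring.
  rewrite e1; apply: leq_trans (_ : n * (11 * ((2 * k + 3 + i) * i * k)) <= _).
    by rewrite leq_mul2l HP orbT.
  have e2 : n * (11 * ((2 * k + 3 + i) * i * k)) = (11 * n) * ((2 * k + 3 + i) * i * k) by ring.
  have e3 : 5 * k * (q * ((2 * k + 3 + i) * i * k)) = (5 * k * q) * ((2 * k + 3 + i) * i * k) by ring.
  by rewrite e2 e3 leq_mul2r h3 orbT.
rewrite leq_pmul2l //; lia.
Qed.


Local Open Scope ring_scope.

Theorem theorem8 :
  (exists K : nat, forall k : nat, ~~ odd k -> (K <= k)%N ->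
     forall n : nat, ~~ odd n ->
     forall i : nat, (k < 2 * i)%N -> (i < k)%N ->
     N_CM_ge k n
       ((n%:R * (5 * i%:R * k%:R - k%:R + i%:R + i%:R ^+ 2) - 2 * (k%:R - i%:R))
          / ((2 * k%:R + 3 + i%:R) * i%:R * k%:R) : rat))
  /\
  (forall eps : rat, 0 < eps ->
     exists k0 : nat, forall k : nat, ~~ odd k -> (k0 < k)%N ->
     exists n0 : nat, forall n : nat, ~~ odd n -> (n0 < n)%N ->
     N_CM_gt k n ((11 / 5 - eps) * n%:R / k%:R)).
Proof.
split.
- exists 100%N => k hk hK n hn i h1 h2 S HS.
  have Hc := core hK hk hn HS.
  have i0 : (0 < i)%N by lia.
  have Hnat := natB_ineq n (size S) k i h1 h2 Hc.
  have EP : (5 * i%:R * k%:R - k%:R + i%:R + i%:R ^+ 2 : rat) = (5 * i * k + i + i * i - k)%N%:R.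
    rewrite natrB; last by nia.
    by rewrite !natrD !natrM; ring.
  have ED : ((2 * k%:R + 3 + i%:R) * i%:R * k%:R : rat) = ((2 * k + 3 + i) * i * k)%N%:R.
    by rewrite !natrM !natrD ?natrM; ring.
  have HD : 0 < ((2 * k%:R + 3 + i%:R) * i%:R * k%:R : rat).
    rewrite ED ltr0n !muln_gt0; apply/andP; split; [|lia]; apply/andP; split; lia.
  rewrite ler_pdivrMr //.
  rewrite EP ED; apply: le_trans (_ : n%:R * (5 * i * k + i + i * i - k)%N%:R <= _).
    rewrite lerBlDr lerDl mulr_ge0 ?ler0n // subr_ge0 ler_nat; lia.
  by rewrite -natrM -natrM ler_nat.
- move=> eps he; exists 100%N => k hk hK; exists 0%N => n hn hn0 S HS.
  have Hc := core (ltnW hK) hk hn HS.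
  have k0 : 0 < (k%:R : rat) by rewrite ltr0n; lia.
  have n0 : 0 < (n%:R : rat) by rewrite ltr0n.
  have Hr : 11 * (n%:R : rat) <= 5 * k%:R * (size S)%:R.
    have := Hc; rewrite -(ler_nat rat) !natrM => H.
    exact: H.
  rewrite ltr_pdivrMr //; nra.
Qed.
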